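(* Let $n>1$ and let $p$ be a probability vector on $[n]$ with all $p_j>0$. If $t_1,\dots,t_{n-1}\ge 0$, then $$\exp\left(-\sum_{j=1}^{n-1} t_j\, e^{(p)}_{(j,j)}\right)\in\langle p\rangle^+ .$$
   Context: $1=(1,\dots,1)^T\in\mathbb{R}^n$; $r_j := p_j/p_n$; $e^{(p)}_{(j,k)} := (e_j - r_j e_n)(e_k^T - e_n^T)$ for $j,k\in[n-1]$, with $\{e_j\}$ the standard basis. $\langle p\rangle^+ := \{P\in M_n(\mathbb{R}) : P1=1,\ P\ge 0 \text{ entrywise},\ pP=p\}$ (row-stochastic matrices with invariant measure $p$). *)

(* Defs.v *)
From HB Require Import structures.
From mathcomp Require Import all_boot all_order all_algebra.
From mathcomp Require Import all_classical all_reals all_analysis.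
Set Implicit Arguments. Unset Strict Implicit. Unset Printing Implicit Defensive.
Import Order.TTheory GRing.Theory Num.Theory.
Import numFieldNormedType.Exports.
Local Open Scope classical_set_scope.
Local Open Scope ring_scope.

(* Dimension N = n.+1 (so N > 1 iff 0 < n); the paper's last index "n" is
   ord_max : 'I_n.+1, and the paper's indices j in [N-1] are the j : 'I_n.+1
   different from ord_max. *)

Definition rr (R : realType) (n : nat) (p : 'rV[R]_n.+1) (j : 'I_n.+1) : R :=
  p 0 j / p 0 ord_max.

Definition eP (R : realType) (n : nat) (p : 'rV[R]_n.+1) (j k : 'I_n.+1)
  : 'M[R]_n.+1 :=
  (delta_mx j 0 - rr p j *: delta_mx ord_max 0 : 'cV[R]_n.+1)
  *m (delta_mx 0 k - delta_mx 0 ord_max : 'rV[R]_n.+1).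

Definition expmx (R : realType) (n : nat) (A : 'M[R]_n.+1) : 'M[R]_n.+1 :=
  lim (series (fun k : nat => (k`!%:R)^-1 *: A ^+ k) @ \oo).

Definition pplus (R : realType) (n : nat) (p : 'rV[R]_n.+1) (P : 'M[R]_n.+1)
  : Prop :=
  [/\ P *m const_mx 1 = (const_mx 1 : 'cV[R]_n.+1),
      (forall i j, 0 <= P i j) & p *m P = p].

(* Main.v *)
Require Import Defs.
From HB Require Import structures.
From mathcomp Require Import all_boot all_order all_algebra.
From mathcomp Require Import all_classical all_reals all_analysis.
From mathcomp Require Import ring lra zify.
Import Order.TTheory GRing.Theory Num.Theory.
Import numFieldNormedType.Exports.
Local Open Scope classical_set_scope.
Local Open Scope ring_scope.
Section S.
Context {R : realType}.
Context {n : nat}.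
Implicit Types M : 'M[R]_n.+1.

Lemma sum_ge_term {I : finType} (F : I -> R) i :
  (forall j, 0 <= F j) -> F i <= \sum_j F j.
Proof. by move=> F0; rewrite (bigD1 i) //= lerDl sumr_ge0. Qed.

Definition anorm M : R := \sum_x \sum_y `|M x y|.

Lemma anorm_ge0 M : 0 <= anorm M.
Proof. by rewrite sumr_ge0 // => x _; rewrite sumr_ge0. Qed.

Lemma entry_le M x y : `|M x y| <= anorm M.
Proof.
apply: (le_trans (sum_ge_term (fun y => `|M x y|) y _)) => //.
by apply: (sum_ge_term (fun x => \sum_y `|M x y|) x) => j; rewrite sumr_ge0.
Qed.

Lemma pow_bound M k x y : `|(M ^+ k) x y| <= anorm M ^+ k.
Proof.
elim: k x y => [|k IH] x y.
  by rewrite expr0 mxE; case: (x == y); rewrite ?normr1 ?normr0.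
rewrite exprS -mulmxE mxE.
apply: le_trans (ler_norm_sum _ _ _) _.
apply: le_trans (_ : \sum_z `|M x z| * anorm M ^+ k <= _).
  by apply: ler_sum => z _; rewrite normrM ler_wpM2l.
rewrite -mulr_suml exprS ler_wpM2r ?exprn_ge0 ?anorm_ge0 //.
by apply: (sum_ge_term (fun x => \sum_y `|M x y|) x) => j; rewrite sumr_ge0.
Qed.
End S.
Section S2.
Context {R : realType}.
Context {n : nat}.
Implicit Types M : 'M[R]_n.+1.

Definition term M (k : nat) : 'M[R]_n.+1 := (k`!%:R)^-1 *: M ^+ k.

Lemma entry_series_cvg M x y : cvgn (series (fun k => term M k x y)).
Proof.
apply: normed_cvg.
idtac.
apply: (@series_le_cvg R (fun k => `|term M k x y|) (exp_coeff (anorm M))).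
- by move=> k.
- by move=> k; rewrite exp_coeff_ge0 // anorm_ge0.
- move=> k; rewrite /term mxE normrM /exp_coeff /=.
  rewrite (@ger0_norm _ (k`!%:R^-1)) ?invr_ge0 // mulrC.
  by rewrite ler_wpM2r ?invr_ge0 // pow_bound.
- have h := is_cvg_series_exp_coeff (anorm M). exact h.
Qed.

Lemma mx_cvg (u : nat -> 'M[R]_n.+1) :
  (forall x y, cvgn (fun K => u K x y)) ->
  u @ \oo --> \matrix_(x, y) limn (fun K => u K x y).
Proof.
move=> h A [P hP sub].
have : \forall K \near \oo, forall ij : 'I_n.+1 * 'I_n.+1, P ij.1 ij.2 (u K ij.1 ij.2).
  apply: filter_forall => -[x y] /=.
  have := hP x y; rewrite mxE => hP'.
  exact: (h x y) _ hP'.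
by apply: filterS => K hK; apply: sub => x y; apply: (hK (x, y)).
Qed.
End S2.
Section S3.
Context {R : realType} {n : nat}.
Variable p : 'rV[R]_n.+1.

Lemma sum_delta1 (j : 'I_n.+1) : \sum_y ((y == j)%:R : R) = 1.
Proof.
rewrite (bigD1 j) //= eqxx big1 ?addr0 // => y /negbTE -> //.
Qed.

Lemma eP_entry j x y : eP p j j x y =
  ((x == j)%:R - rr p j * (x == ord_max)%:R) * ((y == j)%:R - (y == ord_max)%:R).
Proof.
rewrite /eP mxE big_ord1 !mxE /= !eqxx !andbT.
by [].
Qed.

Lemma eP_mul1 j : eP p j j *m (const_mx 1 : 'cV[R]_n.+1) = 0.
Proof.
apply/matrixP => a b; rewrite !mxE.
under eq_bigr do rewrite eP_entry mxE mulr1.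
by rewrite -mulr_sumr sumrB !sum_delta1 subrr mulr0.
Qed.

Lemma p_eP j : p 0 ord_max != 0 -> p *m eP p j j = 0.
Proof.
move=> hm; apply/matrixP => a b; rewrite !mxE.
under eq_bigr do rewrite eP_entry mulrA.
rewrite -mulr_suml.
suff -> : \sum_i p a i * ((i == j)%:R - rr p j * (i == ord_max)%:R) = 0 by rewrite mul0r.
under eq_bigr do rewrite mulrBr mulrCA.
rewrite sumrB -!mulr_sumr.
rewrite (bigD1 j) //= eqxx mulr1 big1 ?addr0; last by move=> i /negbTE ->; rewrite mulr0.
rewrite (bigD1 ord_max) //= eqxx mulr1 big1 ?addr0; last by move=> i /negbTE ->; rewrite mulr0.
by rewrite !ord1 /rr divfK // subrr.
Qed.
End S3.
Section S4.
Context {R : realType} {n : nat}.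
Variable p : 'rV[R]_n.+1.
Hypothesis hp_pos : forall j, 0 < p 0 j.
Variable t : 'I_n.+1 -> R.
Hypothesis ht : forall j, j != ord_max -> 0 <= t j.

Let A : 'M[R]_n.+1 := - \sum_(j | j != ord_max) t j *: eP p j j.

Lemma hm : p 0 ord_max != 0.
Proof. by rewrite gt_eqF. Qed.

Lemma A_mul1 : A *m (const_mx 1 : 'cV[R]_n.+1) = 0.
Proof.
rewrite /A mulNmx mulmx_suml big1 ?oppr0 // => j _.
by rewrite -scalemxAl eP_mul1 scaler0.
Qed.

Lemma pA : p *m A = 0.
Proof.
rewrite /A mulmxN mulmx_sumr big1 ?oppr0 // => j _.
by rewrite -scalemxAr p_eP ?hm // scaler0.
Qed.

Lemma Apow1 k : A ^+ k.+1 *m (const_mx 1 : 'cV[R]_n.+1) = 0.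
Proof. by rewrite exprSr -mulmxE -mulmxA A_mul1 mulmx0. Qed.

Lemma pApow k : p *m A ^+ k.+1 = 0.
Proof. by rewrite exprS -mulmxE mulmxA pA mul0mx. Qed.

Lemma eP_offdiag j x y : j != ord_max -> x != y -> eP p j j x y <= 0.
Proof.
move=> jm xy; have rr0 : 0 <= rr p j by rewrite /rr divr_ge0 // ltW.
rewrite eP_entry.
case: (eqVneq x j) => [exj|xj].
  subst x; have yj : (y == j) = false by rewrite eq_sym (negbTE xy).
  rewrite ?eqxx (negbTE jm) yj mulr0 subr0 mul1r sub0r.
  by rewrite oppr_le0.
case: (eqVneq x ord_max) => [exm|xm].
  subst x; have ym : (y == ord_max) = false by rewrite eq_sym (negbTE xy).
  rewrite ?eqxx ym subr0 mulr1 sub0r mulNr oppr_le0.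
  by rewrite mulr_ge0.
by rewrite mulr0 subrr mul0r.
Qed.

Lemma A_offdiag x y : x != y -> 0 <= A x y.
Proof.
move=> xy; rewrite /A mxE summxE oppr_ge0 sumr_le0 // => j jm.
by rewrite mxE mulr_ge0_le0 ?ht ?eP_offdiag.
Qed.
End S4.
Section S5.
Context {R : realType} {n : nat}.
Implicit Types M : 'M[R]_n.+1.

Lemma scalar_pow (a : R) m : (a%:M : 'M[R]_n.+1) ^+ m = (a ^+ m)%:M.
Proof.
elim: m => [|m IH]; first by rewrite !expr0.
by rewrite !exprS IH -mulmxE -scalar_mxM.
Qed.

Lemma pow_ge0 M : (forall x y, 0 <= M x y) -> forall k x y, 0 <= (M ^+ k) x y.
Proof.
move=> h; elim=> [|k IH] x y.
  by rewrite expr0 mxE; case: (x == y).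
rewrite exprS -mulmxE mxE sumr_ge0 // => z _.
by rewrite mulr_ge0.
Qed.

Lemma binom_fact (k i : nat) : (i <= k)%N ->
  (k`!%:R : R)^-1 * ('C(k, i))%:R = ((k - i)`!%:R)^-1 * (i`!%:R)^-1.
Proof.
move=> ik; have h := bin_fact ik.
have h' : ('C(k, i)%:R * (i`!%:R * (k - i)`!%:R) : R) = k`!%:R.
  by rewrite -!natrM h.
rewrite -h'.
have f1 : (i`!%:R : R) != 0 by rewrite pnatr_eq0 -lt0n fact_gt0.
have f2 : ((k - i)`!%:R : R) != 0 by rewrite pnatr_eq0 -lt0n fact_gt0.
have f3 : ('C(k, i)%:R : R) != 0 by rewrite pnatr_eq0 -lt0n bin_gt0.
by field; rewrite f1 f2 f3.
Qed.
End S5.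
Section S6.
Context {R : realType} {n : nat}.
Implicit Types M : 'M[R]_n.+1.

Lemma term_split M (c : R) k x y :
  term ((-c)%:M + M) k x y = \sum_(0 <= i < k.+1) exp_coeff (-c) (k - i)%N * term M i x y.
Proof.
rewrite /term exprDn_comm; last by rewrite /GRing.comm -!mulmxE scalar_mxC.
rewrite mxE summxE big_mkord mulr_sumr; apply: eq_bigr => i _.
rewrite mulmxnE -mulmxE scalar_pow mul_scalar_mx !mxE /exp_coeff /=.
have ik : (i <= k)%N by rewrite -ltnS ltn_ord.
rewrite -[_ *+ 'C(k, i)]mulr_natl mulrA binom_fact //.
by rewrite mulrACA; congr (_ * _); rewrite mulrC.
Qed.

Lemma series1 (a : nat -> R) : series a 1 = a 0%N.
Proof. by rewrite /series /= big_nat1. Qed.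

Lemma triangle (a b : nat -> R) K :
  \sum_(0 <= k < K) \sum_(0 <= i < k.+1) a (k - i)%N * b i =
  \sum_(0 <= i < K) b i * series a (K - i)%N.
Proof.
elim: K => [|K IH]; first by rewrite !big_geq.
have E1 : \sum_(0 <= i < K.+1) a (K - i)%N * b i =
   \sum_(0 <= i < K) a (K - i)%N * b i + a 0%N * b K.
  by rewrite big_nat_recr //= subnn.
have E2 : \sum_(0 <= i < K.+1) b i * series a (K.+1 - i)%N =
   \sum_(0 <= i < K) b i * series a (K.+1 - i)%N + b K * a 0%N.
  by rewrite big_nat_recr // subSnn series1.
have E3 : \sum_(0 <= i < K) b i * series a (K.+1 - i)%N =
          \sum_(0 <= i < K) b i * series a (K - i)%N + \sum_(0 <= i < K) a (K - i)%N * b i.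
  rewrite -big_split; apply: eq_big_nat => i /andP[_ iK].
  rewrite subSn; last exact: ltnW.
  by rewrite seriesSr mulrDr [b i * a _]mulrC.
rewrite big_nat_recr //.
rewrite IH E1 E2 E3.
by rewrite -addrA [b K * _]mulrC.
Qed.
End S6.
Section S7.
Context {R : realType} {n : nat}.

Lemma exp_entry_ge0 (A : 'M[R]_n.+1) : (forall x y, x != y -> 0 <= A x y) ->
  forall x y, 0 <= limn (series (fun k => term A k x y)).
Proof.
move=> hoff x y.
pose c := anorm A.
pose B := A + c%:M.
have hB : forall u v, 0 <= B u v.
  move=> u v; rewrite /B !mxE; case: (eqVneq u v) => [<-|uv].
    rewrite ?eqxx ?mulr1n.
    have := entry_le A u u; rewrite -/c => /ler_normlP [h1 _].
    lra.
  by rewrite ?(negbTE uv) mulr0n addr0 hoff.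
have hA : A = (-c)%:M + B.
  apply/matrixP => u v; rewrite /B !mxE mulNrn.
  by rewrite [RHS]addrC -addrA addrN addr0.
pose b i := term B i x y.
pose a := exp_coeff (-c).
pose s := series a.
have hu : forall K, series (fun k => term A k x y) K = \sum_(0 <= i < K) b i * s (K - i)%N.
  move=> K; rewrite -triangle /series /=; apply: eq_bigr => k _.
  by rewrite {1}hA term_split.
have hb0 : forall i, 0 <= b i.
  by move=> i; rewrite /b /term mxE mulr_ge0 ?invr_ge0 // pow_ge0.
have hbe : forall i, b i <= exp_coeff (anorm B) i.
  move=> i; rewrite /b /term mxE /exp_coeff /= mulrC ler_wpM2r ?invr_ge0 //.
  exact: le_trans (ler_norm _) (pow_bound _ _ _ _).
have hs : s @ \oo --> expR (-c) := is_cvg_series_exp_coeff (-c).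
have [M _ hM] : \forall m \near \oo, 0 < s m := cvgr_gt _ hs 0 (expR_gt0 (-c)).
pose E := \sum_(0 <= m < M.+1) `|s m| + 1.
have hE : forall m, (m <= M)%N -> `|s m| <= E.
  move=> m hm; rewrite /E big_mkord.
  apply: le_trans (_ : \sum_(i < M.+1) `|s i| <= _); last by rewrite lerDl.
  exact: (sum_ge_term (fun i : 'I_M.+1 => `|s i|) (Ordinal (hm : (m < M.+1)%N))).
have E0 : 0 < E by rewrite /E ltr_wpDl // sumr_ge0.
suff H : forall e, 0 < e -> - e <= limn (series (fun k => term A k x y)).
  rewrite leNgt; apply/negP => hl.
  have := H (- limn (series (fun k => term A k x y)) / 2).
  lra.
move=> e e0.
apply: limr_ge; first exact: entry_series_cvg.
pose d := e / (M%:R * E + 1).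
have ME0 : 0 < M%:R * E + 1 by rewrite ltr_wpDl // mulr_ge0 // ltW.
have d0 : 0 < d by rewrite divr_gt0.
have key : (M%:R * E + 1) * d = e by rewrite /d mulrC divfK // gt_eqF.
have [I0 _ hI] : \forall i \near \oo, exp_coeff (anorm B) i < d :=
  cvgr_lt _ (cvg_exp_coeff _) d d0.
exists (M + I0)%N => // K /= hK.
rewrite hu (big_cat_nat (n := (K - M)%N)) //=; last exact: leq_subr.
have h1 : 0 <= \sum_(0 <= i < K - M) b i * s (K - i)%N.
  apply: le_trans (_ : \sum_(0 <= i < K - M) (0 : R) <= _).
    by rewrite sumr_const_nat mul0rn.
  apply: ler_sum_nat => i /andP[_ hi].
  rewrite mulr_ge0 // ltW // hM //=.
  lia.
have h2 : - (d * E) *+ M <= \sum_(K - M <= i < K) b i * s (K - i)%N.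
  apply: le_trans (_ : \sum_(K - M <= i < K) (- (d * E)) <= _).
    by rewrite sumr_const_nat (_ : (K - (K - M))%N = M) //; lia.
  apply: ler_sum_nat => i /andP[hi1 hi2].
  have hbi : b i <= d.
    apply: le_trans (hbe i) (ltW (hI i _)) => /=; lia.
  have hsi : `|s (K - i)%N| <= E by apply: hE; lia.
  have : `|b i * s (K - i)%N| <= d * E.
    by rewrite normrM ger0_norm // ler_pM.
  by move/ler_normlP => [h _]; rewrite -lerNl.
have h3 : M%:R * E * d <= e.
  by rewrite -key mulrDl mul1r lerDl ltW.
move: h2; rewrite mulNrn -mulr_natr => h2.
have h4 : d * E * M%:R = M%:R * E * d by ring.
lra.
Qed.
End S7.
Section S8.
Context {R : realType} {n : nat}.

Lemma cvg_sum_seq (r : seq 'I_n.+1) (f : 'I_n.+1 -> nat -> R) (l : 'I_n.+1 -> R) :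
  (forall i, f i @ \oo --> l i) ->
  (fun K => \sum_(i <- r) f i K) @ \oo --> \sum_(i <- r) l i.
Proof.
move=> hf; elim: r => [|i r IH].
  rewrite big_nil; under eq_cvg do rewrite big_nil.
  exact: cvg_cst.
rewrite big_cons; under eq_cvg do rewrite big_cons.
exact: cvgD.
Qed.

Lemma ev_const (f : nat -> R) l c :
  f @ \oo --> l -> (forall K, (0 < K)%N -> f K = c) -> l = c.
Proof.
move=> hf hc; apply/eqP; rewrite eq_le; apply/andP; split.
  apply: (cvgr_to_le hf); exists 1%N => // K /= hK; by rewrite hc.
apply: (cvgr_to_ge hf); exists 1%N => // K /= hK; by rewrite hc.
Qed.

Lemma series_entry (A : 'M[R]_n.+1) K x y :
  series (term A) K x y = series (fun k => term A k x y) K.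
Proof. by rewrite /series /= summxE. Qed.

Lemma term0 (A : 'M[R]_n.+1) : term A 0 = 1.
Proof. by rewrite /term expr0 fact0 invr1 scale1r. Qed.

Lemma seriesS_split (A : 'M[R]_n.+1) K :
  series (term A) K.+1 = 1 + \sum_(0 <= k < K) term A k.+1.
Proof. by rewrite /series /= big_nat_recl // term0. Qed.
End S8.
Theorem lemma2 (R : realType) (n : nat) (hn : (0 < n)%N)
  (p : 'rV[R]_n.+1)
  (hp_pos : forall j, 0 < p 0 j) (hp_sum : \sum_j p 0 j = 1)
  (t : 'I_n.+1 -> R) (ht : forall j, j != ord_max -> 0 <= t j) :
  pplus p (expmx (- \sum_(j | j != ord_max) t j *: eP p j j)).
Proof.
have Am1 := A_mul1 p t.
have Aoff := A_offdiag p hp_pos t ht.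
have pAk := pApow p hp_pos t.
have Ak1 := Apow1 p t.
move: Am1 Aoff pAk Ak1.
set A := - \sum_(j | j != ord_max) t j *: eP p j j => Am1 Aoff pAk Ak1.
have e : forall x y, (fun K => series (term A) K x y) = series (fun k => term A k x y).
  by move=> x y; apply/funext => K; exact: series_entry.
have hcv : series (term A) @ \oo --> \matrix_(x, y) limn (fun K => series (term A) K x y).
  by apply: mx_cvg => x y; rewrite e; exact: entry_series_cvg.
have hL : expmx A = \matrix_(x, y) limn (fun K => series (term A) K x y).
  exact: (cvg_lim (@norm_hausdorff _ _) hcv).
have hLe : forall x y, expmx A x y = limn (series (fun k => term A k x y)).
  by move=> x y; rewrite hL mxE e.
have hcvE : forall x y, series (fun k => term A k x y) @ \oo --> expmx A x y.
  by move=> x y; rewrite hLe; exact: entry_series_cvg.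
split.
- apply/matrixP => x z; rewrite !mxE.
  under eq_bigr do rewrite mxE mulr1.
  apply: (ev_const (fun K => \sum_y series (fun k => term A k x y) K)).
    exact: cvg_sum_seq.
  case=> [//|K] _.
  have hS : series (term A) K.+1 *m (const_mx 1 : 'cV[R]_n.+1) = const_mx 1.
    rewrite seriesS_split mulmxDl mul1mx mulmx_suml big1 ?addr0 // => k _.
    by rewrite /term -scalemxAl Ak1 scaler0.
  have := congr1 (fun M : 'cV[R]_n.+1 => M x z) hS; rewrite !mxE => <-.
  by apply: eq_bigr => y _; rewrite mxE mulr1 series_entry.
- by move=> x y; rewrite hLe; exact: (exp_entry_ge0 _ Aoff).
- apply/matrixP => z y; rewrite !mxE.
  apply: (ev_const (fun K => \sum_x p z x * series (fun k => term A k x y) K)).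
    apply: cvg_sum_seq => x; apply: cvgM; [exact: cvg_cst | exact: hcvE].
  case=> [//|K] _.
  have hS : p *m series (term A) K.+1 = p.
    rewrite seriesS_split mulmxDr mulmx1 mulmx_sumr big1 ?addr0 // => k _.
    by rewrite /term -scalemxAr pAk scaler0.
  have := congr1 (fun M : 'rV[R]_n.+1 => M z y) hS; rewrite !mxE => <-.
  by apply: eq_bigr => x _; rewrite series_entry.
Qed.
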